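(* Let $N\in\mathbb N$, $\mathbb S\subset\mathbb R^n$ measurable, $\mathbf s_0\in\mathbb S$, $S\in[0,1]$, and $\gamma_1,\ldots,\gamma_{N-1}\in(0,1]$. For each $k\in\{0,\ldots,N-1\}$ let $\boldsymbol\pi^k=\{\boldsymbol\pi^k_k,\ldots,\boldsymbol\pi^k_{N-1}\}$ be a shrinking-horizon policy sequence. Assume $$\mathbb P[\mathbf s_{1,\ldots,N}\in\mathbb S\mid \mathbf s_0,\boldsymbol\pi^0]\ge S_0\ge S$$ and that for every $k\in\{1,\ldots,N-1\}$ and every state $\mathbf s_k\in\mathbb S$, $$\mathbb P[\mathbf s_{k+1,\ldots,N}\in\mathbb S\mid \mathbf s_k,\boldsymbol\pi^k]\ge S_k,\qquad S_k:=\gamma_k\,\mathbb P[\mathbf s_{k+1,\ldots,N}\in\mathbb S\mid \mathbf s_k,\boldsymbol\pi^{k-1}],$$ where in the right-hand side $\boldsymbol\pi^{k-1}$ is used through its components $\boldsymbol\pi^{k-1}_k,\ldots,\boldsymbol\pi^{k-1}_{N-1}$. Then the closed-loop policy sequence $\{\boldsymbol\pi^0_0,\boldsymbol\pi^1_1,\ldots,\boldsymbol\pi^{N-1}_{N-1}\}$ (i.e. $\mathbf u_k=\boldsymbol\pi^k_k(\mathbf s_k)$ for $k=0,\ldots,N-1$) satisfies $$\mathbb P\big[\mathbf s_{1,\ldots,N}\in\mathbb S\mid \mathbf s_0,\{\boldsymbol\pi^0_0,\ldots,\boldsymbol\pi^{N-1}_{N-1}\}\big]\ge \Big(\prod_{k=1}^{N-1}\gamma_k\Big)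 S_0 .$$
   Context: States $\mathbf s_k\in\mathbb R^n$ evolve as a controlled Markov chain with transition probability density $\rho[\mathbf s_+\mid\mathbf s,\mathbf u]$; a policy applied at time $t$ is a measurable map $\mathbf s\mapsto\mathbf u$. The notation $\mathbf s_{a,\ldots,b}\in\mathbb S$ means $\mathbf s_j\in\mathbb S$ for all $j=a,\ldots,b$. For a policy sequence $\boldsymbol\pi$ defined at times $0,\ldots,N-1$, $\mathbb P[\mathbf s_{1,\ldots,N}\in\mathbb S\mid\mathbf s_0,\boldsymbol\pi]$ is the mission-wide probability of safety (MWPS). For a policy sequence with components at times $k,\ldots,N-1$, $\mathbb P[\mathbf s_{k+1,\ldots,N}\in\mathbb S\mid\mathbf s_k,\cdot]$ is the remaining MWPS: the probability that the chain started at $\mathbf s_k$ at time $k$ and driven by those components stays in $\mathbb S$ at times $k+1,\ldots,N$. *)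

(* Defs.v *)
From HB Require Import structures.
From mathcomp Require Import all_boot all_order all_algebra.
From mathcomp Require Import all_classical all_reals all_analysis.
Set Implicit Arguments. Unset Strict Implicit. Unset Printing Implicit Defensive.
Import Order.TTheory GRing.Theory Num.Theory.
Local Open Scope classical_set_scope.
Local Open Scope ring_scope.
Local Open Scope ereal_scope.

(* Controlled Markov chain on a measurable state space T with control space U,
   transition law given by a probability kernel P : (state, control) ~> next state.
   A policy sequence is p : nat -> T -> U, p j being the policy applied at time j.

   rem_safe P SS p m j s = probability that the chain started at s at time j,
   driven by p j, p (j+1), ..., p (j+m-1), stays in SS at times j+1, ..., j+m,
   computed as the iterated integral (law of the chain):
     rem_safe 0 j s = 1,
     rem_safe (m+1) j s = \int_{t in SS} rem_safe m (j+1) t  P((s, p j s))(dt). *)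
Fixpoint rem_safe (R : realType) (d1 d2 : measure_display)
  (T : measurableType d1) (U : measurableType d2)
  (P : R.-pker (T * U)%type ~> T) (SS : set T) (p : nat -> T -> U)
  (m j : nat) (s : T) {struct m} : \bar R :=
  match m with
  | 0%N => 1
  | m'.+1 => \int[P (s, p j s)]_(t in SS) rem_safe P SS p m' j.+1 t
  end.

(* Remaining MWPS  P[s_{k+1..N} in SS | s_k = s, p]  (p used via p k, ..., p (N-1)).
   For k = 0 this is the mission-wide probability of safety P[s_{1..N} in SS | s_0, p]. *)
Definition mwps (R : realType) (d1 d2 : measure_display)
  (T : measurableType d1) (U : measurableType d2)
  (P : R.-pker (T * U)%type ~> T) (SS : set T) (N : nat) (p : nat -> T -> U)
  (k : nat) (s : T) : \bar R :=
  rem_safe P SS p (N - k)%N k s.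

(* Main.v *)
Require Import Defs.
From mathcomp Require Import measurable_realfun kernel lebesgue_integral.
Set Warnings "-all".
From HB Require Import structures.
From mathcomp Require Import all_boot all_order all_algebra.
From mathcomp Require Import all_classical all_reals all_analysis.
Set Warnings "-all".
Import Order.TTheory GRing.Theory Num.Theory.
Local Open Scope classical_set_scope.
Local Open Scope ring_scope.

Lemma rem_safe_ge0 (R : realType) (d1 d2 : measure_display)
  (T : measurableType d1) (U : measurableType d2)
  (P : R.-pker (T * U)%type ~> T) (SS : set T) (p : nat -> T -> U) m j s :
  (0 <= rem_safe P SS p m j s)%E.
Proof.
elim: m j s => [|m IH] j s /=; first by [].
by apply: integral_ge0 => t _.
Qed.

Lemma rem_safe_meas (R : realType) (d1 d2 : measure_display)
  (T : measurableType d1) (U : measurableType d2)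
  (P : R.-pker (T * U)%type ~> T) (SS : set T) (mSS : measurable SS)
  (p : nat -> T -> U) m : forall j,
  (forall i, (j <= i < j + m)%N -> measurable_fun setT (p i)) ->
  measurable_fun setT (rem_safe P SS p m j).
Proof.
elim: m => [|m IH] j hp /=; first exact: measurable_cst.
have mf : measurable_fun setT (rem_safe P SS p m j.+1).
  apply: IH => i /andP[h1 h2]; apply: hp; apply/andP; split; first exact: ltnW.
  by rewrite addnS.
have -> : (fun s => \int[P (s, p j s)]_(t in SS) rem_safe P SS p m j.+1 t)%E =
  (fun z => \int[P z]_t ((rem_safe P SS p m j.+1) \_ SS) t)%E \o (fun s => (s, p j s)).
  by apply: funext => s /=; rewrite integral_mkcond.
apply: measurableT_comp.
  apply: measurable_fun_integral_kernel.
  - by move=> V mV; exact: measurable_kernel.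
  - by apply: erestrict_ge0 => x _; exact: rem_safe_ge0.
  - by apply/(measurable_restrictT _ _).1 => //; exact: measurable_funTS.
apply: measurable_fun_pair; first exact: measurable_id.
by apply: hp; rewrite leqnn /= addnS ltnS leq_addr.
Qed.

(* pi k j = component pi^k_j of the k-th shrinking-horizon policy sequence
   (only k <= j < N is relevant). *)
Theorem proposition1 (R : realType) (d1 d2 : measure_display)
  (T : measurableType d1) (U : measurableType d2)
  (P : R.-pker (T * U)%type ~> T)
  (N : nat) (SS : set T) (mSS : measurable SS) (s0 : T) (s0S : SS s0)
  (Sb S0 : R) (hSb : 0 <= Sb <= 1)
  (gamma : nat -> R) (hgamma : forall k, (1 <= k < N)%N -> 0 < gamma k <= 1)
  (pi : nat -> nat -> T -> U)
  (hpi : forall k j, (k <= j < N)%N -> measurable_fun setT (pi k j))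
  (h0 : (S0%:E <= mwps P SS N (pi 0%N) 0%N s0)%E) (hS0 : Sb <= S0)
  (hk : forall k, (1 <= k < N)%N -> forall s, SS s ->
          ((gamma k)%:E * mwps P SS N (pi k.-1) k s <= mwps P SS N (pi k) k s)%E) :
  (((\prod_(1 <= k < N) gamma k) * S0)%:E
     <= mwps P SS N (fun j => pi j j) 0%N s0)%E.
Proof.
pose c k := \prod_(k.+1 <= j < N) gamma j.
have c0 k : 0 <= c k.
  rewrite /c big_seq_cond; apply: prodr_ge0 => j /andP[]; rewrite mem_index_iota.
  move=> /andP[h1 h2] _.
  have hj : (1 <= j < N)%N by rewrite h2 andbT (leq_trans _ h1).
  by case/andP: (hgamma j hj) => /ltW.
have measV : forall k m j, (k <= j)%N -> (j + m <= N)%N ->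
    measurable_fun setT (rem_safe P SS (pi k) m j).
  move=> k m j kj jm; apply: rem_safe_meas => // i /andP[h1 h2].
  by apply: hpi; rewrite (leq_trans kj h1) /= (leq_trans h2 jm).
have measQ : forall m j, (j + m <= N)%N ->
    measurable_fun setT (rem_safe P SS (fun j => pi j j) m j).
  move=> m j jm; apply: rem_safe_meas => // i /andP[h1 h2].
  by apply: hpi; rewrite leqnn /= (leq_trans h2 jm).
have step : forall k, (k < N)%N -> forall s, SS s ->
   (forall t, SS t -> ((c k)%:E * rem_safe P SS (pi k) (N - k.+1) k.+1 t <=
        rem_safe P SS (fun j => pi j j) (N - k.+1) k.+1 t)%E) ->
   ((c k)%:E * mwps P SS N (pi k) k s <= mwps P SS N (fun j => pi j j) k s)%E.
  move=> k kN s Ss hpt; rewrite /mwps -(subnSK kN) /=.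
  rewrite -ge0_integralZl_EFin //; last first.
  - apply: measurable_funTS; apply: measV => //; by rewrite subnKC.
  - by move=> t _; exact: rem_safe_ge0.
  apply: ge0_le_integral => //.
  - by move=> t _; apply: mule_ge0; [rewrite lee_fin; exact: c0|exact: rem_safe_ge0].
  - apply: measurable_funeM; apply: measurable_funTS; apply: measV => //.
    by rewrite subnKC.
  - apply: measurable_funTS; apply: measQ; by rewrite subnKC.
have key : forall n k, (k + n.+1 = N)%N -> forall s, SS s ->
  ((c k)%:E * mwps P SS N (pi k) k s <= mwps P SS N (fun j => pi j j) k s)%E.
  elim=> [|n IH] k hkN s Ss.
    apply: step => //; first by rewrite -hkN addn1.
    move=> t _; rewrite -hkN addn1 subnn /= /c -hkN addn1 big_geq // mul1e.
    by [].
  apply: step => //; first by rewrite -hkN addnS ltnS leq_addr.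
  move=> t St.
  have kN : (k.+1 < N)%N by rewrite -hkN !addnS !ltnS leq_addr.
  have := IH k.+1; rewrite addSnnS => /(_ hkN t St) IHt.
  have := hk k.+1 _ t St; rewrite kN /= => /(_ isT) hkt.
  apply: le_trans IHt; rewrite /c big_ltn // EFinM -muleA.
  rewrite muleCA.
  apply: lee_wpmul2l; first by rewrite lee_fin; exact: c0.
  exact: hkt.
case: (posnP N) => [N0|Npos].
  move: h0; rewrite /mwps N0 /= big_geq // mul1r; exact.
have hN : (0 + N.-1.+1 = N)%N by rewrite add0n prednK.
have := key N.-1 0%N hN s0 s0S.
move=> H; apply: le_trans H; rewrite EFinM.
apply: lee_wpmul2l; first by rewrite lee_fin; exact: c0.
exact: h0.
Qed.
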